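(* Suppose Assumption 1 holds and let $\gamma\in(0,1]$. (i) Let $x\in\operatorname{dom}\psi$, let $H$ be symmetric with $Q^x_H$ $\sigma$-strongly convex for some $\sigma>0$, and let $d$ satisfy the $\eta$-inexactness condition for $Q^x_H$ for some $\eta\in[0,1)$. If $$(1-\gamma)\frac{1-\sqrt\eta}{1+\sqrt\eta}\,\sigma + \lambda_{\min}(H)\ge L,$$ then the sufficient decrease condition $F(x)-F(x+d)\ge -\gamma Q^x_H(d)\ge 0$ holds. (ii) Consequently, in Algorithm 2 (with every computed $d^k$ satisfying the $\eta$-inexactness condition for a fixed $\eta\in[0,1)$), if the initial matrix satisfies $m_0 I\preceq H^0_k\preceq M_0 I$ for some $M_0>0$ and $m_0\le M_0$, then for Variant 2 the final (accepted) $H_k$ satisfies $\|H_k\|\le \tilde M_2(\eta)$; and for Variant 1, if in addition $m_0>0$, the final $H_k$ satisfies $\|H_k\|\le\tilde M_1(\eta)$.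
   Context: Problem setting: $F(x)=f(x)+\psi(x)$ on $\mathbb{R}^n$. Assumption 1: $f:\mathbb{R}^n\to\mathbb{R}$ is differentiable with $L$-Lipschitz continuous gradient for some $L>0$; $\psi:\mathbb{R}^n\to\mathbb{R}\cup\{+\infty\}$ is convex, proper and closed; $F$ is bounded below; and the solution set $\Omega=\{x: F(x)=F^*\}$, $F^*=\inf F$, is nonempty. For $x\in\mathbb{R}^n$ and a symmetric matrix $H$, $Q^x_H(d) \coloneqq \nabla f(x)^T d + \frac12 d^T H d + \psi(x+d) - \psi(x)$ (so $Q^x_H(0)=0$) and $Q^*\coloneqq\inf_d Q^x_H(d)$. A vector $d$ satisfies the $\eta$-inexactness condition (for $Q=Q^x_H$) if $Q(d)-Q^*\le \eta(Q(0)-Q^* )$, equivalently $Q(d)\le(1-\eta)Q^*$. $\lambda_{\min}(H)$ is the smallest eigenvalue, $\|H\|$ the spectral norm. Algorithm 2: given $\beta\in(0,1)$, $\gamma\in(0,1]$, $x^0$, and fixed $\eta\in[0,1)$; for $k=0,1,2,\dots$: choose a symmetric initial matrix $H^0_k$ (in Variant 1, $H^0_k\succ0$); set $\alpha_k\leftarrow1$, $H_k\leftarrow H^0_k$, and compute $d^k$ satisfying the $\eta$-inexactness condition for $Q^{x^k}_{H_k}$; while the sufficient decrease condition $F(x^k)-F(x^k+d^k)\ge -\gamma Q^{x^k}_{H_k}(d^k)\ge 0$ fails: in Variant 1 set $\alpha_k\leftarrow\beta\alpha_k$ and $H_k\leftarrow H^0_k/\alpha_k$; in Variant 2 set $H_k\leftarrow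 H^0_k+\alpha_k^{-1}I$ and then $\alpha_k\leftarrow\beta\alpha_k$; then recompute $d^k$ satisfying the $\eta$-inexactness condition for $Q^{x^k}_{H_k}$. Finally set $x^{k+1}=x^k+d^k$. The ''final'' $H_k$ is the matrix for which the sufficient decrease condition is accepted. Constants: $\tilde M_2(\eta)\coloneqq M_0+\max\left\{1,\ \frac1\beta\left(\frac{L(1+\sqrt\eta)}{2-\gamma(1-\sqrt\eta)}-m_0\right)\right\}$ and $\tilde M_1(\eta)\coloneqq M_0\max\left\{1,\ \frac{L(1+\sqrt\eta)}{\beta(2-\gamma(1-\sqrt\eta))m_0}\right\}$. *)

(* Defs.v *)
From Stdlib Require Import Reals.
From Stdlib Require Vectors.Fin.
Open Scope R_scope.

Definition Vec (n : nat) := Fin.t n -> R.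
Definition Mat (n : nat) := Fin.t n -> Fin.t n -> R.

Fixpoint vsum (n : nat) : (Fin.t n -> R) -> R :=
  match n return (Fin.t n -> R) -> R with
  | O => fun _ => 0
  | S m => fun g => g Fin.F1 + vsum m (fun i => g (Fin.FS i))
  end.

Definition dot {n} (u v : Vec n) : R := vsum n (fun i => u i * v i).
Definition vnorm {n} (v : Vec n) : R := sqrt (dot v v).
Definition vadd {n} (u v : Vec n) : Vec n := fun i => u i + v i.
Definition vsub {n} (u v : Vec n) : Vec n := fun i => u i - v i.
Definition vscal {n} (c : R) (v : Vec n) : Vec n := fun i => c * v i.
Definition vzero {n} : Vec n := fun _ => 0.

Definition mv {n} (H : Mat n) (v : Vec n) : Vec n := fun i => dot (H i) v.
Definition quad {n} (H : Mat n) (v : Vec n) : R := dot v (mv H v).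
Definition Id {n} : Mat n := fun i j => if Fin.eq_dec i j then 1 else 0.
Definition mscal {n} (c : R) (H : Mat n) : Mat n := fun i j => c * H i j.
Definition madd {n} (A B : Mat n) : Mat n := fun i j => A i j + B i j.

Definition symmetric {n} (H : Mat n) : Prop := forall i j, H i j = H j i.

Definition loewner_le {n} (A B : Mat n) : Prop :=
  forall v : Vec n, quad A v <= quad B v.
Definition posdef {n} (H : Mat n) : Prop :=
  forall v : Vec n, (exists i, v i <> 0) -> 0 < quad H v.

Definition eigenvalue {n} (H : Mat n) (l : R) : Prop :=
  exists v : Vec n, (exists i, v i <> 0) /\ forall i, mv H v i = l * v i.
Definition is_lambda_min {n} (H : Mat n) (l : R) : Prop :=
  eigenvalue H l /\ forall mu, eigenvalue H mu -> l <= mu.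

Definition is_spec_norm {n} (H : Mat n) (s : R) : Prop :=
  is_lub (fun r => exists v : Vec n, vnorm v <= 1 /\ r = vnorm (mv H v)) s.

Inductive ER := ERfin (r : R) | ERinf.

Definition ER_le (a b : ER) : Prop :=
  match a, b with
  | _, ERinf => True
  | ERinf, ERfin _ => False
  | ERfin x, ERfin y => x <= y
  end.
Definition ER_add (a b : ER) : ER :=
  match a, b with
  | ERfin x, ERfin y => ERfin (x + y)
  | _, _ => ERinf
  end.
(* scaling by a positive real *)
Definition ER_scal (t : R) (a : ER) : ER :=
  match a with ERfin x => ERfin (t * x) | ERinf => ERinf end.

Definition dom {n} (psi : Vec n -> ER) (x : Vec n) : Prop := psi x <> ERinf.

Definition convex_ext {n} (psi : Vec n -> ER) : Prop :=
  forall (a b : Vec n) (t : R), 0 < t < 1 ->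
    ER_le (psi (vadd (vscal t a) (vscal (1 - t) b)))
          (ER_add (ER_scal t (psi a)) (ER_scal (1 - t) (psi b))).

Definition proper_ext {n} (psi : Vec n -> ER) : Prop := exists x, dom psi x.

Definition vconv {n} (xs : nat -> Vec n) (x : Vec n) : Prop :=
  forall eps, 0 < eps -> exists N, forall k, (N <= k)%nat -> vnorm (vsub (xs k) x) < eps.

(* closed = lower semicontinuous = all sublevel sets are closed *)
Definition closed_ext {n} (psi : Vec n -> ER) : Prop :=
  forall (c : R) (xs : nat -> Vec n) (x : Vec n),
    (forall k, ER_le (psi (xs k)) (ERfin c)) -> vconv xs x -> ER_le (psi x) (ERfin c).

Definition strongly_convex {n} (sigma : R) (Q : Vec n -> ER) : Prop :=
  forall (a b : Vec n) (t : R), 0 < t < 1 ->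
    ER_le (Q (vadd (vscal t a) (vscal (1 - t) b)))
          (ER_add (ER_add (ER_scal t (Q a)) (ER_scal (1 - t) (Q b)))
                  (ERfin (- (sigma / 2) * t * (1 - t) * (vnorm (vsub a b))^2))).

Definition is_gradient {n} (f : Vec n -> R) (gf : Vec n -> Vec n) : Prop :=
  forall x : Vec n, forall eps, 0 < eps -> exists delta, 0 < delta /\
    forall h : Vec n, vnorm h < delta ->
      Rabs (f (vadd x h) - f x - dot (gf x) h) <= eps * vnorm h.

Definition lipschitz {n} (g : Vec n -> Vec n) (L : R) : Prop :=
  forall x y, vnorm (vsub (g x) (g y)) <= L * vnorm (vsub x y).

Definition Fobj {n} (f : Vec n -> R) (psi : Vec n -> ER) (x : Vec n) : ER :=
  ER_add (ERfin (f x)) (psi x).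

Definition assumption1 {n} (f : Vec n -> R) (gf : Vec n -> Vec n)
    (psi : Vec n -> ER) (L : R) : Prop :=
  0 < L /\ is_gradient f gf /\ lipschitz gf L /\
  convex_ext psi /\ proper_ext psi /\ closed_ext psi /\
  (exists b, forall x, ER_le (ERfin b) (Fobj f psi x)) /\
  (exists xs, forall x, ER_le (Fobj f psi xs) (Fobj f psi x)).

(* Q^x_H(d) = grad f(x)^T d + 1/2 d^T H d + psi(x+d) - psi(x)
   (meaningful for x in dom psi; +oo if x+d not in dom psi) *)
Definition Qfun {n} (gf : Vec n -> Vec n) (psi : Vec n -> ER) (x : Vec n)
    (H : Mat n) (d : Vec n) : ER :=
  match psi (vadd x d), psi x with
  | ERfin a, ERfin b => ERfin (dot (gf x) d + / 2 * quad H d + a - b)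
  | _, _ => ERinf
  end.

Definition is_ER_inf {n} (Q : Vec n -> ER) (qs : R) : Prop :=
  (forall d, ER_le (ERfin qs) (Q d)) /\
  (forall e, 0 < e -> exists d, ER_le (Q d) (ERfin (qs + e))).

(* eta-inexactness: Q(d) - Q_star <= eta (Q(0) - Q_star), i.e. Q(d) <= (1-eta) Q_star *)
Definition eta_inexact {n} (Q : Vec n -> ER) (eta : R) (d : Vec n) : Prop :=
  exists qs, is_ER_inf Q qs /\ ER_le (Q d) (ERfin ((1 - eta) * qs)).

Definition suff_dec {n} (f : Vec n -> R) (gf : Vec n -> Vec n) (psi : Vec n -> ER)
    (gamma : R) (x : Vec n) (H : Mat n) (d : Vec n) : Prop :=
  exists q Fx Fxd,
    Qfun gf psi x H d = ERfin q /\
    Fobj f psi x = ERfin Fx /\ Fobj f psi (vadd x d) = ERfin Fxd /\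
    Fx - Fxd >= - gamma * q /\ - gamma * q >= 0.

(* trial matrices of the backtracking loop, j = number of failed tests *)
Definition trialH1 {n} (H0 : Mat n) (beta : R) (j : nat) : Mat n :=
  mscal (/ beta ^ j) H0.
Definition trialH2 {n} (H0 : Mat n) (beta : R) (j : nat) : Mat n :=
  match j with
  | O => H0
  | S j' => madd H0 (mscal (/ beta ^ j') Id)
  end.

(* run of Algorithm 2 with trial-matrix rule [trial]:
   x k = iterates, H0 k = initial matrices, J k = accepted trial index,
   d k j = direction computed at the j-th trial of iteration k *)
Definition alg2_run {n} (f : Vec n -> R) (gf : Vec n -> Vec n) (psi : Vec n -> ER)
    (gamma eta : R) (trial : Mat n -> nat -> Mat n)
    (x : nat -> Vec n) (H0 : nat -> Mat n) (J : nat -> nat)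
    (d : nat -> nat -> Vec n) : Prop :=
  (forall k, symmetric (H0 k)) /\
  (forall k j, (j <= J k)%nat ->
      eta_inexact (Qfun gf psi (x k) (trial (H0 k) j)) eta (d k j)) /\
  (forall k j, (j < J k)%nat ->
      ~ suff_dec f gf psi gamma (x k) (trial (H0 k) j) (d k j)) /\
  (forall k, suff_dec f gf psi gamma (x k) (trial (H0 k) (J k)) (d k (J k))) /\
  (forall k, x (S k) = vadd (x k) (d k (J k))).

Definition Mtilde2 (L beta gamma eta m0 M0 : R) : R :=
  M0 + Rmax 1 (/ beta * (L * (1 + sqrt eta) / (2 - gamma * (1 - sqrt eta)) - m0)).
Definition Mtilde1 (L beta gamma eta m0 M0 : R) : R :=
  M0 * Rmax 1 (L * (1 + sqrt eta) / (beta * (2 - gamma * (1 - sqrt eta)) * m0)).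

(* Main.v *)
Require Import Defs.
From Stdlib Require Import Reals Lra Lia Psatz FunctionalExtensionality Classical.
From Stdlib Require Vectors.Fin.
Open Scope R_scope.

Lemma vsum_ext n (g h : Fin.t n -> R) : (forall i, g i = h i) -> vsum n g = vsum n h.
Proof. intros E. f_equal. apply functional_extensionality; auto. Qed.

Lemma vsum_plus n (g h : Fin.t n -> R) : vsum n (fun i => g i + h i) = vsum n g + vsum n h.
Proof. induction n; simpl. lra. rewrite IHn. lra. Qed.

Lemma vsum_scal n c (g : Fin.t n -> R) : vsum n (fun i => c * g i) = c * vsum n g.
Proof. induction n; simpl. lra. rewrite (IHn (fun i => g (Fin.FS i))). lra. Qed.

Lemma vsum_opp n (g : Fin.t n -> R) : vsum n (fun i => - g i) = - vsum n g.
Proof. induction n; simpl. lra. rewrite (IHn (fun i => g (Fin.FS i))). lra. Qed.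

Lemma vsum_zero n : vsum n (fun _ => 0) = 0.
Proof. induction n; simpl. lra. rewrite IHn. lra. Qed.

Lemma vsum_le n (g h : Fin.t n -> R) : (forall i, g i <= h i) -> vsum n g <= vsum n h.
Proof. induction n; simpl; intros E. lra. specialize (IHn (fun i => g (Fin.FS i)) (fun i => h (Fin.FS i))).
  assert (H1 := E Fin.F1). assert (vsum n (fun i => g (Fin.FS i)) <= vsum n (fun i => h (Fin.FS i))) by (apply IHn; auto). lra. Qed.

Lemma vsum_nonneg n (g : Fin.t n -> R) : (forall i, 0 <= g i) -> 0 <= vsum n g.
Proof. intros E. apply Rle_trans with (vsum n (fun _ => 0)). rewrite vsum_zero; lra. apply vsum_le; auto. Qed.

Lemma vsum_swap n m (g : Fin.t n -> Fin.t m -> R) :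
  vsum n (fun i => vsum m (fun j => g i j)) = vsum m (fun j => vsum n (fun i => g i j)).
Proof. induction n; simpl. symmetry; apply vsum_zero.
  rewrite IHn. rewrite <- vsum_plus. reflexivity. Qed.

Lemma dot_comm n (u v : Vec n) : dot u v = dot v u.
Proof. unfold dot. apply vsum_ext. intros; lra. Qed.

Lemma dot_add_l n (u v w : Vec n) : dot (vadd u v) w = dot u w + dot v w.
Proof. unfold dot, vadd. rewrite <- vsum_plus. apply vsum_ext. intros; lra. Qed.
Lemma dot_add_r n (u v w : Vec n) : dot w (vadd u v) = dot w u + dot w v.
Proof. rewrite dot_comm, dot_add_l, (dot_comm _ u), (dot_comm _ v). auto. Qed.
Lemma dot_sub_l n (u v w : Vec n) : dot (vsub u v) w = dot u w - dot v w.
Proof. unfold dot, vsub. unfold Rminus. rewrite <- vsum_opp, <- vsum_plus. apply vsum_ext. intros; lra. Qed.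
Lemma dot_sub_r n (u v w : Vec n) : dot w (vsub u v) = dot w u - dot w v.
Proof. rewrite dot_comm, dot_sub_l, (dot_comm _ u), (dot_comm _ v). auto. Qed.
Lemma dot_scal_l n c (u w : Vec n) : dot (vscal c u) w = c * dot u w.
Proof. unfold dot, vscal. rewrite <- vsum_scal. apply vsum_ext. intros; lra. Qed.
Lemma dot_scal_r n c (u w : Vec n) : dot w (vscal c u) = c * dot w u.
Proof. rewrite dot_comm, dot_scal_l, dot_comm. auto. Qed.
Lemma dot_zero_r n (u : Vec n) : dot u vzero = 0.
Proof. unfold dot, vzero. transitivity (vsum n (fun _ => 0)); [apply vsum_ext; intros; lra | apply vsum_zero]. Qed.
Lemma dot_zero_l n (u : Vec n) : dot vzero u = 0.
Proof. rewrite dot_comm. apply dot_zero_r. Qed.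
Lemma dot_nonneg n (u : Vec n) : 0 <= dot u u.
Proof. unfold dot. apply vsum_nonneg. intros; nra. Qed.

Lemma mv_add n (H : Mat n) u v : mv H (vadd u v) = vadd (mv H u) (mv H v).
Proof. apply functional_extensionality; intro i. unfold mv, vadd at 1. apply dot_add_r. Qed.
Lemma mv_sub n (H : Mat n) u v : mv H (vsub u v) = vsub (mv H u) (mv H v).
Proof. apply functional_extensionality; intro i. unfold mv, vsub at 1. apply dot_sub_r. Qed.
Lemma mv_scal n (H : Mat n) c u : mv H (vscal c u) = vscal c (mv H u).
Proof. apply functional_extensionality; intro i. unfold mv, vscal at 1. apply dot_scal_r. Qed.

Lemma dot_mv_sym n (H : Mat n) u v : symmetric H -> dot u (mv H v) = dot v (mv H u).
Proof. intros S. unfold mv, dot.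
  transitivity (vsum n (fun i => vsum n (fun j => u i * H i j * v j))).
  - apply vsum_ext; intro i. rewrite <- vsum_scal. apply vsum_ext; intro j. lra.
  - rewrite vsum_swap. apply vsum_ext; intro j. rewrite <- vsum_scal. apply vsum_ext; intro i.
    rewrite (S i j). lra. Qed.

Lemma quad_add n (H : Mat n) u v : symmetric H ->
  quad H (vadd u v) = quad H u + quad H v + 2 * dot u (mv H v).
Proof. intros S. unfold quad. rewrite mv_add, dot_add_l, !dot_add_r.
  rewrite (dot_mv_sym _ _ v u S). lra. Qed.
Lemma quad_sub n (H : Mat n) u v : symmetric H ->
  quad H (vsub u v) = quad H u + quad H v - 2 * dot u (mv H v).
Proof. intros S. unfold quad. rewrite mv_sub, dot_sub_l, !dot_sub_r.
  rewrite (dot_mv_sym _ _ v u S). lra. Qed.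
Lemma quad_scal n (H : Mat n) c u : quad H (vscal c u) = c * c * quad H u.
Proof. unfold quad. rewrite mv_scal, dot_scal_l, dot_scal_r. lra. Qed.

Lemma quad_madd n (A B : Mat n) v : quad (madd A B) v = quad A v + quad B v.
Proof. unfold quad. rewrite <- dot_add_r. f_equal. apply functional_extensionality; intro i.
  unfold mv, vadd, madd, dot. rewrite <- vsum_plus. apply vsum_ext; intros; lra. Qed.
Lemma quad_mscal n c (A : Mat n) v : quad (mscal c A) v = c * quad A v.
Proof. unfold quad. rewrite <- dot_scal_r. f_equal. apply functional_extensionality; intro i.
  unfold mv, vscal, mscal, dot. rewrite <- vsum_scal. apply vsum_ext; intros; lra. Qed.

Lemma vsum_delta n (i : Fin.t n) (v : Vec n) :
  vsum n (fun j => (if Fin.eq_dec i j then 1 else 0) * v j) = v i.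
Proof. induction n. inversion i. simpl.
  pattern i; apply Fin.caseS'.
  - destruct (Fin.eq_dec Fin.F1 Fin.F1) as [_|C]; [|now elim C].
    transitivity (1 * v Fin.F1 + 0); [|lra]. f_equal.
    transitivity (vsum n (fun _ : Fin.t n => 0)); [apply vsum_ext | apply vsum_zero].
    intro j. destruct (Fin.eq_dec Fin.F1 (Fin.FS j)) as [E|_]. inversion E. lra.
  - intro p. destruct (Fin.eq_dec (Fin.FS p) Fin.F1) as [E|_]. inversion E.
    rewrite <- (IHn p (fun j => v (Fin.FS j))). transitivity (0 + vsum n (fun j => (if Fin.eq_dec p j then 1 else 0) * v (Fin.FS j))); [|lra].
    f_equal. lra. apply vsum_ext. intro j.
    destruct (Fin.eq_dec (Fin.FS p) (Fin.FS j)) as [E|E]; destruct (Fin.eq_dec p j) as [E'|E']; auto.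
    + apply Fin.FS_inj in E. contradiction.
    + subst. contradiction.
Qed.

Lemma mv_Id n (v : Vec n) : mv Id v = v.
Proof. apply functional_extensionality; intro i. unfold mv, dot, Id. apply vsum_delta. Qed.
Lemma quad_Id n (v : Vec n) : quad Id v = dot v v.
Proof. unfold quad. rewrite mv_Id. auto. Qed.

Lemma sym_Id n : symmetric (@Id n).
Proof. intros i j. unfold Id. destruct (Fin.eq_dec i j), (Fin.eq_dec j i); subst; auto; congruence. Qed.
Lemma sym_madd n (A B : Mat n) : symmetric A -> symmetric B -> symmetric (madd A B).
Proof. intros SA SB i j. unfold madd. rewrite SA, SB. auto. Qed.
Lemma sym_mscal n c (A : Mat n) : symmetric A -> symmetric (mscal c A).
Proof. intros SA i j. unfold mscal. rewrite SA. auto. Qed.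

Lemma vnorm_sq n (v : Vec n) : vnorm v ^ 2 = dot v v.
Proof. unfold vnorm. rewrite pow2_sqrt; auto. apply dot_nonneg. Qed.
Lemma vnorm_nonneg n (v : Vec n) : 0 <= vnorm v.
Proof. apply sqrt_pos. Qed.
Lemma vnorm_scal n c (v : Vec n) : vnorm (vscal c v) = Rabs c * vnorm v.
Proof. unfold vnorm. rewrite dot_scal_l, dot_scal_r. rewrite <- Rmult_assoc.
  rewrite sqrt_mult_alt. f_equal. rewrite <- sqrt_Rsqr_abs. unfold Rsqr. auto.
  nra. Qed.

Lemma quad_nonneg_disc a b c : 0 <= a -> (forall k, 0 <= a * k * k + b * k + c) -> b * b <= 4 * a * c.
Proof. intros Ha Hk. destruct (Req_dec a 0) as [Z|Z].
  - subst. destruct (Req_dec b 0) as [B|B]. subst; lra.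
    exfalso. specialize (Hk (- (Rabs c + 1) / b)).
    replace (0 * (- (Rabs c + 1) / b) * (- (Rabs c + 1) / b) + b * (- (Rabs c + 1) / b) + c)
      with (- (Rabs c + 1) + c) in Hk by (field; auto).
    pose proof (Rle_abs c). lra.
  - specialize (Hk (- b / (2 * a))).
    replace (a * (- b / (2 * a)) * (- b / (2 * a)) + b * (- b / (2 * a)) + c)
      with ((4 * a * c - b * b) / (4 * a)) in Hk by (field; auto).
    assert (0 < 4 * a) by lra.
    apply Rmult_le_compat_r with (r := 4 * a) in Hk; [|lra].
    unfold Rdiv in Hk. rewrite Rmult_assoc, Rinv_l in Hk by lra. lra.
Qed.

Lemma cauchy_schwarz_sq n (u v : Vec n) : dot u v * dot u v <= dot u u * dot v v.
Proof.
  assert (Q := quad_nonneg_disc (dot v v) (- 2 * dot u v) (dot u u) (dot_nonneg _ v)).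
  assert (dot u v * dot u v * 4 <= 4 * dot v v * dot u u); [|nra].
  replace (dot u v * dot u v * 4) with ((- 2 * dot u v) * (- 2 * dot u v)) by ring.
  apply Q. intro k. pose proof (dot_nonneg _ (vsub u (vscal k v))) as P.
  rewrite dot_sub_l, !dot_sub_r, !dot_scal_l, !dot_scal_r, (dot_comm _ v u) in P. nra.
Qed.

Lemma cauchy_schwarz n (u v : Vec n) : dot u v <= vnorm u * vnorm v.
Proof. unfold vnorm. rewrite <- sqrt_mult_alt by apply dot_nonneg.
  apply Rle_trans with (Rabs (dot u v)). apply Rle_abs.
  rewrite <- sqrt_Rsqr_abs. apply sqrt_le_1_alt. unfold Rsqr. apply cauchy_schwarz_sq. Qed.

Lemma vadd_scal_plus n (x d : Vec n) t h :
  vadd (vadd x (vscal t d)) (vscal h d) = vadd x (vscal (t + h) d).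
Proof. apply functional_extensionality; intro i. unfold vadd, vscal. ring. Qed.

Lemma phi_deriv n (f : Vec n -> R) gf (x d : Vec n) t :
  is_gradient f gf ->
  derivable_pt_lim (fun s => f (vadd x (vscal s d))) t (dot (gf (vadd x (vscal t d))) d).
Proof.
  intros G eps Heps.
  set (y := vadd x (vscal t d)).
  set (N := vnorm d + 1).
  assert (HN : 0 < N) by (unfold N; pose proof (vnorm_nonneg _ d); lra).
  destruct (G y (eps / (2 * N))) as [delta [Hd Hb]].
  { apply Rdiv_lt_0_compat; lra. }
  assert (Hdp : 0 < delta / N) by (apply Rdiv_lt_0_compat; lra).
  exists (mkposreal _ Hdp). simpl. intros h Hh0 Hh.
  assert (Hv : vnorm (vscal h d) < delta).
  { rewrite vnorm_scal. apply Rle_lt_trans with (Rabs h * N).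
    apply Rmult_le_compat_l. apply Rabs_pos. unfold N; lra.
    apply Rmult_lt_reg_r with (/ N). apply Rinv_0_lt_compat; lra.
    rewrite Rmult_assoc, Rinv_r by lra. rewrite Rmult_1_r. exact Hh. }
  specialize (Hb _ Hv). unfold y in Hb. rewrite vadd_scal_plus in Hb.
  rewrite dot_scal_r, vnorm_scal in Hb. fold y in Hb.
  replace ((f (vadd x (vscal (t + h) d)) - f y) / h - dot (gf y) d)
    with ((f (vadd x (vscal (t + h) d)) - f y - h * dot (gf y) d) / h) by (field; auto).
  unfold Rdiv at 1. rewrite Rabs_mult, Rabs_inv.
  assert (Ha : 0 < Rabs h) by (apply Rabs_pos_lt; auto).
  apply Rle_lt_trans with (eps / (2 * N) * (Rabs h * vnorm d) * / Rabs h).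
  apply Rmult_le_compat_r. left; apply Rinv_0_lt_compat; lra. exact Hb.
  replace (eps / (2 * N) * (Rabs h * vnorm d) * / Rabs h) with (eps * vnorm d / (2 * N)) by (field; lra).
  apply Rmult_lt_reg_r with (2 * N). lra. unfold Rdiv. rewrite Rmult_assoc, Rinv_l by lra.
  unfold N. pose proof (vnorm_nonneg _ d). nra.
Qed.

Lemma descent n (f : Vec n -> R) gf L (x d : Vec n) :
  is_gradient f gf -> lipschitz gf L ->
  f (vadd x d) <= f x + dot (gf x) d + L / 2 * dot d d.
Proof.
  intros G Lip.
  set (phi := fun s => f (vadd x (vscal s d))).
  set (l0 := dot (gf x) d).
  set (D := dot d d).
  set (g := fun s => phi s - l0 * s - L / 2 * D * (s * s)).
  assert (Hg : forall c, 0 <= c <= 1 -> derivable_pt_lim g c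
     (dot (gf (vadd x (vscal c d))) d - l0 * 1 - L / 2 * D * (1 * c + c * 1))).
  { intros c _. unfold g.
    apply (derivable_pt_lim_minus (fun s => phi s - l0 * s) (fun s => L / 2 * D * (s * s))).
    apply (derivable_pt_lim_minus phi (fun s => l0 * s)).
    apply phi_deriv; auto.
    apply derivable_pt_lim_scal. apply derivable_pt_lim_id.
    apply derivable_pt_lim_scal. apply (derivable_pt_lim_mult id id). apply derivable_pt_lim_id. apply derivable_pt_lim_id. }
  destruct (MVT_cor2 g _ 0 1 Rlt_0_1 Hg) as [c [Ec Hc]].
  assert (Hle : dot (gf (vadd x (vscal c d))) d - l0 <= L * c * D).
  { unfold l0. rewrite <- dot_sub_l.
    eapply Rle_trans. apply cauchy_schwarz.
    assert (E : vsub (vadd x (vscal c d)) x = vscal c d).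
    { apply functional_extensionality; intro i. unfold vsub, vadd, vscal. ring. }
    pose proof (Lip (vadd x (vscal c d)) x) as Lp. rewrite E, vnorm_scal, Rabs_pos_eq in Lp by lra.
    pose proof (vnorm_nonneg _ d).
    apply Rle_trans with (L * (c * vnorm d) * vnorm d).
    apply Rmult_le_compat_r; auto.
    replace (L * (c * vnorm d) * vnorm d) with (L * c * (vnorm d ^ 2)) by ring.
    rewrite vnorm_sq. apply Rle_refl. }
  assert (g 1 <= g 0) by nra.
  unfold g, phi in H.
  assert (E0 : vadd x (vscal 0 d) = x).
  { apply functional_extensionality; intro i. unfold vadd, vscal. ring. }
  assert (E1 : vadd x (vscal 1 d) = vadd x d).
  { apply functional_extensionality; intro i. unfold vadd, vscal. ring. }
  rewrite E0, E1 in H. fold l0 D. lra.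
Qed.

Lemma key_bound s sigma p r D :
  0 <= s < 1 -> 0 < sigma -> 0 <= D -> r >= (1 - s * s) * p -> r <= p -> 0 <= p ->
  (forall t, 0 < t < 1 -> sigma / 2 * t * (1 - t) * D <= p - t * r) ->
  sigma * (1 - s) * D <= 2 * r * (1 + s).
Proof.
  intros Hs Hsig HD Hr1 Hr2 Hp Ht.
  destruct (Req_dec s 0) as [Z|Z].
  - subst s. assert (r = p) by nra. subst r.
    rewrite Rminus_0_r, Rplus_0_r, !Rmult_1_r.
    destruct (Rle_dec (sigma * D) (2 * p)) as [Ok|Bad]. lra. exfalso.
    apply Rnot_le_lt in Bad.
    assert (HsD : 0 < sigma * D) by lra.
    set (t := (1 + 2 * p / (sigma * D)) / 2).
    assert (Hq : 0 <= 2 * p / (sigma * D) < 1).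
    { split. apply Rmult_le_pos. lra. left; apply Rinv_0_lt_compat; lra.
      apply Rmult_lt_reg_r with (sigma * D). lra. unfold Rdiv. rewrite Rmult_assoc, Rinv_l by lra. lra. }
    assert (Htt : 0 < t < 1) by (unfold t; lra).
    specialize (Ht t Htt).
    assert (E2 : sigma * D * t = (sigma * D + 2 * p) / 2).
    { unfold t. field. split; intro Z0; rewrite Z0 in HsD; lra. }
    clearbody t.
    assert (E : sigma / 2 * t * (1 - t) * D = (1 - t) * (sigma * D * t / 2)) by field.
    rewrite E in Ht.
    rewrite E2 in Ht. assert (0 < 1 - t) by lra. nra.
  - assert (Hs0 : 0 < s) by lra.
    assert (Ht1 : 0 < 1 / (1 + s) < 1).
    { split. apply Rdiv_lt_0_compat; lra.
      apply Rmult_lt_reg_r with (1 + s). lra. unfold Rdiv. rewrite Rmult_assoc, Rinv_l by lra. lra. }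
    specialize (Ht _ Ht1).
    assert (E : sigma / 2 * (1 / (1 + s)) * (1 - 1 / (1 + s)) * D = sigma * s * D / (2 * (1+s) * (1+s))) by (field; lra).
    rewrite E in Ht.
    assert (Hp2 : p * ((1 - s) * (1 + s)) <= r) by nra.
    assert (Ht2 : sigma * s * D <= 2 * (1 + s) * (1 + s) * p - 2 * (1 + s) * r).
    { assert (P : 0 < 2 * (1 + s) * (1 + s)) by nra.
      apply Rmult_le_compat_r with (r := 2 * (1 + s) * (1 + s)) in Ht; [|lra].
      replace (sigma * s * D / (2 * (1 + s) * (1 + s)) * (2 * (1 + s) * (1 + s))) with (sigma * s * D) in Ht by (field; lra).
      replace ((p - 1 / (1 + s) * r) * (2 * (1 + s) * (1 + s))) with (2 * (1 + s) * (1 + s) * p - 2 * (1 + s) * r) in Ht by (field; lra).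
      exact Ht. }
    assert (Ht3 : sigma * s * D * (1 - s) <= 2 * (1 + s) * (p * ((1 - s) * (1 + s))) - 2 * (1 + s) * r * (1 - s)).
    { apply Rmult_le_compat_r with (r := 1 - s) in Ht2; [|lra]. nra. }
    assert (Ht4 : sigma * s * D * (1 - s) <= 2 * (1 + s) * r * s) by nra.
    assert (s * (sigma * (1 - s) * D) <= s * (2 * r * (1 + s))) by nra.
    apply Rmult_le_reg_l with s; lra.
Qed.

Lemma key_final s sigma lam L gamma p r D :
  0 <= s < 1 -> 0 < sigma -> 0 < gamma <= 1 -> 0 <= D -> r >= (1 - s * s) * p -> r <= p -> 0 <= p ->
  (forall t, 0 < t < 1 -> sigma / 2 * t * (1 - t) * D <= p - t * r) ->
  (1 - gamma) * ((1 - s) / (1 + s)) * sigma + lam >= L ->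
  (L - lam) / 2 * D <= (1 - gamma) * r.
Proof.
  intros Hs Hsig Hg HD Hr1 Hr2 Hp Ht HL.
  assert (0 <= (1 - s * s) * p) by (apply Rmult_le_pos; nra).
  assert (Hr0 : 0 <= r) by lra.
  destruct (Rle_dec (L - lam) 0) as [N|P].
  - assert ((L - lam) * D <= 0) by (assert (0 <= (lam - L) * D) by (apply Rmult_le_pos; lra); lra).
    assert (0 <= (1 - gamma) * r) by (apply Rmult_le_pos; lra).
    assert ((L - lam) / 2 * D = (L - lam) * D / 2) by field. lra.
  - apply Rnot_le_lt in P.
    pose proof (key_bound s sigma p r D Hs Hsig HD Hr1 Hr2 Hp Ht) as KB.
    set (K := (1 - gamma) * ((1 - s) / (1 + s)) * sigma) in *.
    assert (HK : (L - lam) * D <= K * D) by (apply Rmult_le_compat_r; lra).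
    assert (E : K * D = (1 - gamma) * (sigma * (1 - s) * D) / (1 + s)) by (unfold K; field; lra).
    assert (HH : K * D <= (1 - gamma) * (2 * r * (1 + s)) / (1 + s)).
    { rewrite E. unfold Rdiv. apply Rmult_le_compat_r. left; apply Rinv_0_lt_compat; lra.
      apply Rmult_le_compat_l; lra. }
    replace ((1 - gamma) * (2 * r * (1 + s)) / (1 + s)) with (2 * ((1 - gamma) * r)) in HH by (field; lra).
    assert ((L - lam) / 2 * D = (L - lam) * D / 2) by field. lra.
Qed.

Lemma vadd_zero n (x : Vec n) : vadd x vzero = x.
Proof. apply functional_extensionality; intro i. unfold vadd, vzero. ring. Qed.
Lemma vsub_zero n (x : Vec n) : vsub x vzero = x.
Proof. apply functional_extensionality; intro i. unfold vsub, vzero. ring. Qed.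
Lemma quad_zero n (H : Mat n) : quad H vzero = 0.
Proof. unfold quad. apply dot_zero_l. Qed.
Lemma conv_zero n (d : Vec n) t : vadd (vscal t d) (vscal (1 - t) vzero) = vscal t d.
Proof. apply functional_extensionality; intro i. unfold vadd, vscal, vzero. ring. Qed.

Lemma core n (f : Vec n -> R) gf psi L gamma x (H : Mat n) sigma eta lam d :
  is_gradient f gf -> lipschitz gf L -> 0 < gamma <= 1 -> dom psi x -> 0 < sigma ->
  strongly_convex sigma (Qfun gf psi x H) -> 0 <= eta < 1 ->
  eta_inexact (Qfun gf psi x H) eta d ->
  (forall v, lam * dot v v <= quad H v) ->
  (1 - gamma) * ((1 - sqrt eta) / (1 + sqrt eta)) * sigma + lam >= L ->
  suff_dec f gf psi gamma x H d.
Proof.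
  intros G Lip Hg Hdom Hsig SC Heta [qs [[Hinf _] Hd]] Hlam HL.
  unfold dom in Hdom.
  destruct (psi x) as [b|] eqn:Ex; [|contradiction].
  assert (Q0 : Qfun gf psi x H vzero = ERfin 0).
  { unfold Qfun. rewrite vadd_zero, Ex, quad_zero, dot_zero_r. f_equal. ring. }
  destruct (psi (vadd x d)) as [a|] eqn:Ed.
  2:{ unfold Qfun in Hd. rewrite Ed in Hd. simpl in Hd. contradiction. }
  set (q := dot (gf x) d + / 2 * quad H d + a - b).
  assert (Qd : Qfun gf psi x H d = ERfin q).
  { unfold Qfun. rewrite Ed, Ex. reflexivity. }
  rewrite Qd in Hd. simpl in Hd.
  assert (Hq1 := Hinf d). rewrite Qd in Hq1. simpl in Hq1.
  assert (Hq0 := Hinf vzero). rewrite Q0 in Hq0. simpl in Hq0.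
  assert (Ht : forall t, 0 < t < 1 -> sigma / 2 * t * (1 - t) * dot d d <= - qs - t * - q).
  { intros t Ht. specialize (SC d vzero t Ht). rewrite conv_zero in SC.
    assert (Hi := Hinf (vscal t d)).
    rewrite Qd, Q0, vsub_zero, vnorm_sq in SC.
    destruct (Qfun gf psi x H (vscal t d)) as [z|]; simpl in SC, Hi; [|contradiction].
    assert (E : - (sigma / 2) * t * (1 - t) * dot d d = - (sigma / 2 * t * (1 - t) * dot d d)) by field.
    rewrite E in SC. lra. }
  assert (Hs : 0 <= sqrt eta < 1).
  { split. apply sqrt_pos. rewrite <- sqrt_1. apply sqrt_lt_1_alt. lra. }
  assert (Hss : sqrt eta * sqrt eta = eta) by (apply sqrt_sqrt; lra).
  assert (Hr1 : - q >= (1 - sqrt eta * sqrt eta) * - qs) by (rewrite Hss; lra).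
  pose proof (key_final (sqrt eta) sigma lam L gamma (- qs) (- q) (dot d d) Hs Hsig Hg
    (dot_nonneg _ d) Hr1 ltac:(lra) ltac:(lra) Ht HL) as KF.
  pose proof (descent n f gf L x d G Lip) as Dsc.
  pose proof (Hlam d) as Hl.
  exists q, (f x + b), (f (vadd x d) + a).
  unfold Fobj. rewrite Ex, Ed. simpl.
  split; [exact Qd|]. split; [reflexivity|]. split; [reflexivity|].
  assert (0 <= (1 - eta) * - qs) by (apply Rmult_le_pos; lra).
  assert (Hqn : q <= 0) by lra.
  split.
  - assert (E1 : (L - lam) / 2 * dot d d = L / 2 * dot d d - lam * dot d d / 2) by field.
    unfold q in *. lra.
  - assert (0 <= gamma * - q) by (apply Rmult_le_pos; lra). lra.
Qed.

Lemma Qfun_sc n (gf : Vec n -> Vec n) psi x (H : Mat n) lam :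
  convex_ext psi -> symmetric H -> (forall v, lam * dot v v <= quad H v) ->
  strongly_convex lam (Qfun gf psi x H).
Proof.
  intros Cv S Hl a c t Ht.
  set (w := vadd (vscal t a) (vscal (1 - t) c)).
  assert (Ew : vadd x w = vadd (vscal t (vadd x a)) (vscal (1 - t) (vadd x c))).
  { apply functional_extensionality; intro i. unfold w, vadd, vscal. ring. }
  specialize (Cv (vadd x a) (vadd x c) t Ht). rewrite <- Ew in Cv.
  unfold Qfun.
  destruct (psi x) as [b|]; destruct (psi (vadd x w)) as [pw|];
   destruct (psi (vadd x a)) as [pa|]; destruct (psi (vadd x c)) as [pc|]; simpl in *; auto.
  assert (Eg : dot (gf x) w = t * dot (gf x) a + (1 - t) * dot (gf x) c).
  { unfold w. rewrite dot_add_r, !dot_scal_r. ring. }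
  assert (Eq : quad H w = t * quad H a + (1 - t) * quad H c - t * (1 - t) * quad H (vsub a c)).
  { unfold w. rewrite quad_add, !quad_scal, quad_sub, mv_scal, dot_scal_l, dot_scal_r by auto. ring. }
  assert (Hac := Hl (vsub a c)).
  replace (vnorm (vsub a c) * (vnorm (vsub a c) * 1)) with (vnorm (vsub a c) ^ 2) by (simpl; ring). rewrite vnorm_sq.
  assert (Htt : 0 <= t * (1 - t)) by (apply Rmult_le_pos; lra).
  assert (K : t * (1 - t) * (lam * dot (vsub a c) (vsub a c)) <= t * (1 - t) * quad H (vsub a c)).
  { apply Rmult_le_compat_l; auto. }
  rewrite Eg, Eq.
  assert (E2 : - (lam / 2) * t * (1 - t) * dot (vsub a c) (vsub a c) = - (t * (1 - t) * (lam * dot (vsub a c) (vsub a c))) / 2) by field.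
  rewrite E2.
  assert (E3 : / 2 * (t * quad H a + (1 - t) * quad H c - t * (1 - t) * quad H (vsub a c)) =
     t * (/2 * quad H a) + (1 - t) * (/ 2 * quad H c) - t * (1 - t) * quad H (vsub a c) / 2) by field.
  rewrite E3.
  assert (E4 : t * (dot (gf x) a + / 2 * quad H a + pa - b) + (1 - t) * (dot (gf x) c + / 2 * quad H c + pc - b)
     = t * dot (gf x) a + (1 - t) * dot (gf x) c + (t * (/ 2 * quad H a) + (1 - t) * (/ 2 * quad H c)) + (t * pa + (1 - t) * pc) - b) by ring.
  rewrite E4. lra.
Qed.

Lemma spec_norm_bound n (H : Mat n) B s :
  symmetric H -> 0 <= B ->
  (forall v, - B * dot v v <= quad H v <= B * dot v v) ->
  is_spec_norm H s -> s <= B.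
Proof.
  intros S HB Hq [_ Lub]. apply Lub. intros r [v [Hv ->]].
  set (w := mv H v). set (X := dot w w). set (Y := dot v v).
  assert (Hk : forall k, 0 <= 2 * B * X * k * k + - 4 * X * k + 2 * B * Y).
  { intro k.
    pose proof (Hq (vadd (vscal k w) v)) as [_ P1].
    pose proof (Hq (vsub (vscal k w) v)) as [P2 _].
    rewrite quad_add in P1 by auto. rewrite quad_sub in P2 by auto.
    rewrite dot_add_l, !dot_add_r, !dot_scal_l, !dot_scal_r in P1.
    rewrite dot_sub_l, !dot_sub_r, !dot_scal_l, !dot_scal_r in P2.
    fold w X Y in P1, P2. rewrite (dot_comm _ v w) in P1, P2. 
    assert (E : B * (k * (k * X) + k * dot w v + (k * dot w v + Y)) - (- B * (k * (k * X) - k * dot w v - (k * dot w v - Y))) = 2 * B * X * k * k + 2 * B * Y) by ring.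
    lra. }
  assert (HBX : 0 <= 2 * B * X) by (apply Rmult_le_pos; [lra| apply dot_nonneg]).
  pose proof (quad_nonneg_disc _ _ _ HBX Hk) as Dk.
  assert (HX : X <= B * B * Y).
  { assert (0 <= X) by apply dot_nonneg.
    destruct (Req_dec X 0) as [Z|Z]. rewrite Z. assert (0 <= Y) by apply dot_nonneg.
    apply Rmult_le_pos; [nra|auto].
    assert (16 * X * X <= 16 * X * (B * B * Y)) by nra.
    apply Rmult_le_reg_l with (16 * X). lra. lra. }
  unfold vnorm. fold w X.
  assert (Hy : sqrt Y <= 1) by exact Hv.
  apply Rle_trans with (sqrt (B * B * Y)). apply sqrt_le_1_alt; auto.
  rewrite sqrt_mult_alt by nra. rewrite sqrt_square by auto. fold Y.
  pose proof (sqrt_pos Y). nra.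
Qed.

Lemma sqrt_eta_bounds eta : 0 <= eta < 1 -> 0 <= sqrt eta < 1.
Proof. intros. split. apply sqrt_pos. rewrite <- sqrt_1. apply sqrt_lt_1_alt. lra. Qed.

Lemma lstar_pos L gamma eta : 0 < L -> 0 < gamma <= 1 -> 0 <= eta < 1 ->
  0 < 2 - gamma * (1 - sqrt eta) /\ 0 < L * (1 + sqrt eta) / (2 - gamma * (1 - sqrt eta)).
Proof. intros. pose proof (sqrt_eta_bounds eta H1).
  assert (gamma * (1 - sqrt eta) <= 1) by (assert (gamma * (1 - sqrt eta) <= 1 * 1) by (apply Rmult_le_compat; lra); lra).
  split. lra. apply Rdiv_lt_0_compat. nra. lra. Qed.

Lemma good_trial n (f : Vec n -> R) gf psi L gamma eta x (H : Mat n) lam d :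
  assumption1 f gf psi L -> 0 < gamma <= 1 -> 0 <= eta < 1 -> dom psi x -> symmetric H ->
  (forall v, lam * dot v v <= quad H v) ->
  L * (1 + sqrt eta) / (2 - gamma * (1 - sqrt eta)) <= lam ->
  eta_inexact (Qfun gf psi x H) eta d -> suff_dec f gf psi gamma x H d.
Proof.
  intros [HL [G [Lip [Cv _]]]] Hg He Hdom S Hq Hl Hin.
  destruct (lstar_pos L gamma eta HL Hg He) as [P1 P2].
  pose proof (sqrt_eta_bounds eta He) as Hs.
  apply (core n f gf psi L gamma x H lam eta lam d G Lip Hg Hdom ltac:(lra) (Qfun_sc n gf psi x H lam Cv S Hq) He Hin Hq).
  assert (E : (1 - gamma) * ((1 - sqrt eta) / (1 + sqrt eta)) * lam + lam = lam * (2 - gamma * (1 - sqrt eta)) / (1 + sqrt eta)) by (field; lra).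
  rewrite E.
  apply Rmult_le_compat_r with (r := 2 - gamma * (1 - sqrt eta)) in Hl; [|lra].
  replace (L * (1 + sqrt eta) / (2 - gamma * (1 - sqrt eta)) * (2 - gamma * (1 - sqrt eta))) with (L * (1 + sqrt eta)) in Hl by (field; lra).
  apply Rle_ge. apply Rmult_le_reg_r with (1 + sqrt eta). lra.
  replace (lam * (2 - gamma * (1 - sqrt eta)) / (1 + sqrt eta) * (1 + sqrt eta)) with (lam * (2 - gamma * (1 - sqrt eta))) by (field; lra).
  lra.
Qed.

Lemma suff_dom n (f : Vec n -> R) gf psi gamma x H d : suff_dec f gf psi gamma x H d -> dom psi x.
Proof. intros [q [Fx [Fxd [_ [E _]]]]]. unfold Fobj in E. unfold dom. intro Z. rewrite Z in E. simpl in E. discriminate. Qed.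

Lemma loew_bounds n (H : Mat n) m0 M0 :
  loewner_le (mscal m0 Id) H /\ loewner_le H (mscal M0 Id) ->
  forall v, m0 * dot v v <= quad H v <= M0 * dot v v.
Proof. intros [A1 A2] v. specialize (A1 v). specialize (A2 v).
  rewrite quad_mscal, quad_Id in A1, A2. lra. Qed.

Lemma variant2 n (f : Vec n -> R) gf psi L gamma beta eta m0 M0 x H0 J d :
  assumption1 f gf psi L -> 0 < gamma <= 1 -> 0 < beta < 1 -> 0 <= eta < 1 -> 0 < M0 -> m0 <= M0 ->
  (forall k, loewner_le (mscal m0 Id) (H0 k) /\ loewner_le (H0 k) (mscal M0 Id)) ->
  alg2_run f gf psi gamma eta (fun H0k j => trialH2 H0k beta j) x H0 J d ->
  forall k s, is_spec_norm (trialH2 (H0 k) beta (J k)) s -> s <= Mtilde2 L beta gamma eta m0 M0.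
Proof.
  intros A1 Hg Hb He HM Hm Lw [Sym [Inex [Fl [Acc Step]]]] k s Hs.
  pose proof A1 as [HL _].
  destruct (lstar_pos L gamma eta HL Hg He) as [P1 P2].
  set (ls := L * (1 + sqrt eta) / (2 - gamma * (1 - sqrt eta))) in *.
  assert (Hdom : dom psi (x k)) by exact (suff_dom _ _ _ _ _ _ _ _ (Acc k)).
  set (B := Mtilde2 L beta gamma eta m0 M0).
  assert (HB1 : M0 + 1 <= B) by (unfold B, Mtilde2; fold ls; pose proof (Rmax_l 1 (/ beta * (ls - m0))); lra).
  assert (HB2 : M0 + / beta * (ls - m0) <= B) by (unfold B, Mtilde2; fold ls; pose proof (Rmax_r 1 (/ beta * (ls - m0))); lra).
  assert (Hbi : 1 < / beta).
  { rewrite <- Rinv_1. apply Rinv_lt_contravar; lra. }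
  assert (HBm : - B <= m0).
  { destruct (Rle_dec 0 m0). lra.
    assert (ls - m0 <= / beta * (ls - m0)) by (assert (0 <= (/ beta - 1) * (ls - m0)) by (apply Rmult_le_pos; lra); nra).
    lra. }
  pose proof (Lw k) as Lk. pose proof (loew_bounds _ _ _ _ Lk) as Bk.
  assert (Final : forall c, 0 <= c -> M0 + c <= B ->
     is_spec_norm (madd (H0 k) (mscal c Id)) s -> s <= B).
  { intros c Hc HMc Hsn. apply (spec_norm_bound _ (madd (H0 k) (mscal c Id)) B s); auto.
    apply sym_madd; [apply Sym | apply sym_mscal, sym_Id]. lra.
    intro v. rewrite quad_madd, quad_mscal, quad_Id. pose proof (dot_nonneg _ v). specialize (Bk v).
    split; nra. }
  pose proof (Acc k) as Ak. pose proof (Fl k) as Fk. pose proof (Inex k) as Ik.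
  cbv beta in Ak, Fk, Ik.
  destruct (J k) as [|j] eqn:EJ.
  - simpl in Hs. apply (spec_norm_bound _ (H0 k) B s); auto. lra.
    intro v. pose proof (dot_nonneg _ v). specialize (Bk v). split; nra.
  - simpl in Hs. destruct j as [|j'].
    + apply (Final (/ beta ^ 0)); auto. simpl; lra. simpl. rewrite Rinv_1. lra.
    + assert (Hpj : 0 < / beta ^ j') by (apply Rinv_0_lt_compat, pow_lt; lra).
      assert (Hlt : m0 + / beta ^ j' < ls).
      { destruct (Rlt_dec (m0 + / beta ^ j') ls) as [Ok|No]; auto. exfalso.
        apply (Fk (S j') ltac:(lia)).
        apply (good_trial n f gf psi L gamma eta (x k) _ (m0 + / beta ^ j')); auto.
        - simpl. apply sym_madd; [apply Sym | apply sym_mscal, sym_Id].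
        - intro v. simpl. rewrite quad_madd, quad_mscal, quad_Id. specialize (Bk v). lra.
        - fold ls. lra. }
      apply (Final (/ beta ^ S j')); auto.
      left; apply Rinv_0_lt_compat, pow_lt; lra.
      simpl. rewrite Rinv_mult.
      assert (/ beta * / beta ^ j' <= / beta * (ls - m0)).
      { apply Rmult_le_compat_l. left; apply Rinv_0_lt_compat; lra. lra. }
      lra.
Qed.

Lemma variant1 n (f : Vec n -> R) gf psi L gamma beta eta m0 M0 x H0 J d :
  assumption1 f gf psi L -> 0 < gamma <= 1 -> 0 < beta < 1 -> 0 <= eta < 1 -> 0 < M0 -> m0 <= M0 ->
  (forall k, loewner_le (mscal m0 Id) (H0 k) /\ loewner_le (H0 k) (mscal M0 Id)) ->
  0 < m0 ->
  alg2_run f gf psi gamma eta (fun H0k j => trialH1 H0k beta j) x H0 J d ->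
  forall k s, is_spec_norm (trialH1 (H0 k) beta (J k)) s -> s <= Mtilde1 L beta gamma eta m0 M0.
Proof.
  intros A1 Hg Hb He HM Hm Lw Hm0 [Sym [Inex [Fl [Acc Step]]]] k s Hs.
  pose proof A1 as [HL _].
  destruct (lstar_pos L gamma eta HL Hg He) as [P1 P2].
  assert (Hdom : dom psi (x k)) by exact (suff_dom _ _ _ _ _ _ _ _ (Acc k)).
  set (B := Mtilde1 L beta gamma eta m0 M0).
  set (ls := L * (1 + sqrt eta) / (2 - gamma * (1 - sqrt eta))) in *.
  assert (EB : L * (1 + sqrt eta) / (beta * (2 - gamma * (1 - sqrt eta)) * m0) = ls / (beta * m0)).
  { unfold ls. field. lra. }
  assert (HB1 : M0 <= B).
  { unfold B, Mtilde1. pose proof (Rmax_l 1 (L * (1 + sqrt eta) / (beta * (2 - gamma * (1 - sqrt eta)) * m0))). nra. }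
  assert (HB2 : M0 * (ls / (beta * m0)) <= B).
  { unfold B, Mtilde1. rewrite EB. apply Rmult_le_compat_l. lra. apply Rmax_r. }
  pose proof (Lw k) as Lk. pose proof (loew_bounds _ _ _ _ Lk) as Bk.
  assert (Final : forall c, 0 < c -> c * M0 <= B ->
     is_spec_norm (mscal c (H0 k)) s -> s <= B).
  { intros c Hc HMc Hsn. apply (spec_norm_bound _ (mscal c (H0 k)) B s); auto.
    apply sym_mscal, Sym. lra.
    intro v. rewrite quad_mscal. pose proof (dot_nonneg _ v). specialize (Bk v).
    assert (c * (m0 * dot v v) <= c * quad (H0 k) v) by (apply Rmult_le_compat_l; lra).
    assert (c * quad (H0 k) v <= c * (M0 * dot v v)) by (apply Rmult_le_compat_l; lra).
    assert (0 <= c * (m0 * dot v v)) by (apply Rmult_le_pos; [lra | apply Rmult_le_pos; lra]).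
    assert (c * (M0 * dot v v) <= B * dot v v) by (rewrite <- Rmult_assoc; apply Rmult_le_compat_r; lra).
    assert (0 <= B * dot v v) by (apply Rmult_le_pos; lra).
    split; lra. }
  pose proof (Acc k) as Ak. pose proof (Fl k) as Fk. pose proof (Inex k) as Ik.
  cbv beta in Ak, Fk, Ik.
  unfold trialH1 in *.
  destruct (J k) as [|j] eqn:EJ.
  - apply (Final (/ beta ^ 0)); auto. simpl; rewrite Rinv_1; lra. simpl; rewrite Rinv_1; lra.
  - assert (Hpj : 0 < / beta ^ j) by (apply Rinv_0_lt_compat, pow_lt; lra).
    assert (Hlt : / beta ^ j * m0 < ls).
    { destruct (Rlt_dec (/ beta ^ j * m0) ls) as [Ok|No]; auto. exfalso.
      apply (Fk j ltac:(lia)).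
      apply (good_trial n f gf psi L gamma eta (x k) _ (/ beta ^ j * m0)); auto.
      - apply sym_mscal, Sym.
      - intro v. rewrite quad_mscal. specialize (Bk v).
        assert (/ beta ^ j * (m0 * dot v v) <= / beta ^ j * quad (H0 k) v) by (apply Rmult_le_compat_l; lra).
        lra.
      - fold ls. lra. }
    apply (Final (/ beta ^ S j)); auto.
    apply Rinv_0_lt_compat, pow_lt; lra.
    simpl. rewrite Rinv_mult.
    assert (Hj : / beta ^ j < ls / m0).
    { apply Rmult_lt_reg_r with m0; auto. unfold Rdiv. rewrite Rmult_assoc, Rinv_l by lra. lra. }
    assert (/ beta * / beta ^ j * M0 <= / beta * (ls / m0) * M0).
    { apply Rmult_le_compat_r. lra. apply Rmult_le_compat_l. left; apply Rinv_0_lt_compat; lra. lra. }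
    assert (E2 : / beta * (ls / m0) * M0 = M0 * (ls / (beta * m0))) by (field; lra).
    lra.
Qed.

Definition vcons {m} (a : R) (w : Vec m) : Vec (S m) :=
  fun i => Fin.caseS' i (fun _ => R) a w.
Definition vtl {m} (v : Vec (S m)) : Vec m := fun j => v (Fin.FS j).

Lemma vcons_F1 m a (w : Vec m) : vcons a w Fin.F1 = a.
Proof. reflexivity. Qed.
Lemma vcons_FS m a (w : Vec m) j : vcons a w (Fin.FS j) = w j.
Proof. reflexivity. Qed.
Lemma vcons_eta m (v : Vec (S m)) : vcons (v Fin.F1) (vtl v) = v.
Proof. apply functional_extensionality. intro i. pattern i; apply Fin.caseS'; reflexivity. Qed.

Lemma dot_S m (u v : Vec (S m)) : dot u v = u Fin.F1 * v Fin.F1 + dot (vtl u) (vtl v).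
Proof. reflexivity. Qed.

Lemma dot_self_zero n (v : Vec n) : dot v v = 0 -> forall i, v i = 0.
Proof. induction n; intros Z i. inversion i.
  rewrite dot_S in Z. pose proof (dot_nonneg _ (vtl v)).
  assert (v Fin.F1 * v Fin.F1 = 0) by nra.
  assert (dot (vtl v) (vtl v) = 0) by nra.
  pattern i; apply Fin.caseS'. nra. intro p. apply (IHn (vtl v) H1 p). Qed.

Lemma dot_self_pos n (v : Vec n) : (exists i, v i <> 0) -> 0 < dot v v.
Proof. intros [i Hi]. destruct (dot_nonneg _ v) as [P|Z]; auto.
  exfalso. apply Hi. apply dot_self_zero; auto. Qed.

Definition blk_a (m : nat) (A : Mat (S m)) := A Fin.F1 Fin.F1.
Definition blk_b (m : nat) (A : Mat (S m)) : Vec m := fun j => A Fin.F1 (Fin.FS j).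
Definition blk_A' (m : nat) (A : Mat (S m)) : Mat m := fun i j => A (Fin.FS i) (Fin.FS j).

Lemma mv_F1 (m : nat) (A : Mat (S m)) v : mv A v Fin.F1 = blk_a m A * v Fin.F1 + dot (blk_b m A) (vtl v).
Proof. reflexivity. Qed.
Lemma mv_FS (m : nat) (A : Mat (S m)) v i : symmetric A -> mv A v (Fin.FS i) = blk_b m A i * v Fin.F1 + mv (blk_A' m A) (vtl v) i.
Proof. intros S. unfold mv at 1. rewrite dot_S. unfold blk_b. rewrite (S (Fin.FS i) Fin.F1). reflexivity. Qed.
Lemma vtl_mv (m : nat) (A : Mat (S m)) v : symmetric A -> vtl (mv A v) = vadd (vscal (v Fin.F1) (blk_b m A)) (mv (blk_A' m A) (vtl v)).
Proof. intros S. apply functional_extensionality. intro i. unfold vtl at 1. rewrite mv_FS by auto.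
  unfold vadd, vscal. ring. Qed.
Lemma quad_S (m : nat) (A : Mat (S m)) v : symmetric A ->
  quad A v = blk_a m A * (v Fin.F1 * v Fin.F1) + 2 * v Fin.F1 * dot (blk_b m A) (vtl v) + quad (blk_A' m A) (vtl v).
Proof. intros S. unfold quad at 1. rewrite dot_S, mv_F1, vtl_mv by auto.
  rewrite dot_add_r, dot_scal_r. unfold quad. rewrite (dot_comm _ (vtl v) (blk_b m A)). ring. Qed.
Lemma sym_A' (m : nat) (A : Mat (S m)) : symmetric A -> symmetric (blk_A' m A).
Proof. intros S i j. unfold blk_A'. apply S. Qed.
Lemma quad_zero0 n (H : Mat n) : quad H vzero = 0.
Proof. unfold quad. apply dot_zero_l. Qed.

Lemma vtl_vcons m a (w : Vec m) : vtl (vcons a w) = w.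
Proof. reflexivity. Qed.

Lemma psd_coercive n : forall A : Mat n, symmetric A -> (forall v, 0 <= quad A v) ->
  (forall v, (forall i, mv A v i = 0) -> forall i, v i = 0) ->
  exists c, 0 < c /\ forall v, c * dot v v <= quad A v.
Proof.
  induction n as [|m IH]; intros A S P K.
  - exists 1. split. lra. intro v. unfold quad, dot. simpl. lra.
  - set (a := blk_a m A). set (b := blk_b m A). set (A' := blk_A' m A).
    assert (QS : forall t w, quad A (vcons t w) = a * (t * t) + 2 * t * dot b w + quad A' w).
    { intros t w. rewrite quad_S by auto. reflexivity. }
    assert (Ha : 0 <= a).
    { pose proof (P (vcons 1 vzero)) as P1. rewrite QS, dot_zero_r, quad_zero0 in P1. lra. }
    destruct (Req_dec a 0) as [Z|Pa].
    + exfalso.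
      assert (Hbb : dot b b = 0).
      { assert (Hk : forall t, 0 <= 0 * t * t + 2 * dot b b * t + quad A' b).
        { intro t. pose proof (P (vcons t b)) as P1. rewrite QS, Z in P1. lra. }
        pose proof (quad_nonneg_disc _ _ _ (Rle_refl 0) Hk). nra. }
      pose proof (dot_self_zero _ b Hbb) as Hb0.
      assert (Ke : forall i, mv A (vcons 1 vzero) i = 0).
      { intro i. pattern i; apply Fin.caseS'.
        - rewrite mv_F1. rewrite vtl_vcons, dot_zero_r. fold a. rewrite Z. simpl. lra.
        - intro p. rewrite mv_FS by auto. rewrite vtl_vcons. fold b A'. rewrite Hb0.
          unfold mv. rewrite dot_zero_r. lra. }
      pose proof (K _ Ke Fin.F1). rewrite vcons_F1 in H. lra.
    + assert (Hap : 0 < a) by lra.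
      set (S' := fun i j => A' i j - b i * b j / a : R).
      assert (mvS : forall w i, mv S' w i = mv A' w i - b i * dot b w / a).
      { intros w i. unfold mv.
        assert (E : S' i = vsub (A' i) (vscal (b i / a) b)).
        { apply functional_extensionality; intro j. unfold S', vsub, vscal. field. lra. }
        rewrite E, dot_sub_l, dot_scal_l. field. lra. }
      assert (quadS : forall w, quad S' w = quad A' w - dot b w * dot b w / a).
      { intro w. unfold quad at 1.
        assert (E : mv S' w = vsub (mv A' w) (vscal (dot b w / a) b)).
        { apply functional_extensionality; intro i. rewrite mvS. unfold vsub, vscal. field. lra. }
        rewrite E, dot_sub_r, dot_scal_r. rewrite (dot_comm _ w b). unfold quad. field. lra. }
      assert (symS : symmetric S').
      { intros i j. unfold S'. assert (EA : A' i j = A' j i) by (apply (sym_A' m A S)). rewrite EA. field. lra. }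
      assert (PS : forall w, 0 <= quad S' w).
      { intro w. pose proof (P (vcons (- dot b w / a) w)) as P1. rewrite QS in P1.
        rewrite quadS. 
        replace (a * (- dot b w / a * (- dot b w / a)) + 2 * (- dot b w / a) * dot b w + quad A' w)
          with (quad A' w - dot b w * dot b w / a) in P1 by (field; lra). exact P1. }
      assert (KS : forall w, (forall i, mv S' w i = 0) -> forall i, w i = 0).
      { intros w Hw j.
        assert (Kv : forall i, mv A (vcons (- dot b w / a) w) i = 0).
        { intro i. pattern i; apply Fin.caseS'.
          - rewrite mv_F1, vtl_vcons, vcons_F1. fold a b. field. lra.
          - intro p. rewrite mv_FS by auto. rewrite vtl_vcons, vcons_F1. fold b A'.
            specialize (Hw p). rewrite mvS in Hw. rewrite <- Hw. field. lra. }
        pose proof (K _ Kv (Fin.FS j)). rewrite vcons_FS in H. exact H. }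
      destruct (IH S' symS PS KS) as [c' [Hc' Hq']].
      set (K2 := dot b b / (a * a)).
      assert (HK2 : 0 <= K2).
      { unfold K2. apply Rmult_le_pos. apply dot_nonneg. left; apply Rinv_0_lt_compat; nra. }
      exists (Rmin (a / 2) (c' / (1 + 2 * K2))).
      split. apply Rmin_glb_lt. lra. apply Rdiv_lt_0_compat; lra.
      intro v. rewrite <- (vcons_eta m v). set (v1 := v Fin.F1). set (w := vtl v).
      rewrite QS. rewrite dot_S, vcons_F1, vtl_vcons.
      set (c := Rmin (a / 2) (c' / (1 + 2 * K2))).
      assert (Hc1 : c <= a / 2) by apply Rmin_l.
      assert (Hc2 : c * (1 + 2 * K2) <= c').
      { assert (c <= c' / (1 + 2 * K2)) by apply Rmin_r.
        apply Rmult_le_compat_r with (r := 1 + 2 * K2) in H; [|lra].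
        replace (c' / (1 + 2 * K2) * (1 + 2 * K2)) with c' in H by (field; lra). exact H. }
      assert (Hc0 : 0 < c) by (unfold c; apply Rmin_glb_lt; [lra | apply Rdiv_lt_0_compat; lra]).
      set (beta := dot b w / a).
      assert (Eq : a * (v1 * v1) + 2 * v1 * dot b w + quad A' w = a * ((v1 + beta) * (v1 + beta)) + quad S' w).
      { rewrite quadS. unfold beta. field. lra. }
      rewrite Eq.
      assert (Hbeta : beta * beta <= K2 * dot w w).
      { unfold beta, K2. pose proof (cauchy_schwarz_sq _ b w) as CS.
        replace (dot b w / a * (dot b w / a)) with (dot b w * dot b w / (a * a)) by (field; lra).
        replace (dot b b / (a * a) * dot w w) with (dot b b * dot w w / (a * a)) by (field; lra).
        unfold Rdiv. apply Rmult_le_compat_r. left; apply Rinv_0_lt_compat; nra. exact CS. }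
      pose proof (Hq' w) as Hw.
      assert (Hww : 0 <= dot w w) by apply dot_nonneg.
      assert (Hv1 : v1 * v1 <= 2 * ((v1 + beta) * (v1 + beta)) + 2 * (beta * beta)) by (pose proof (Rle_0_sqr (v1 + 2 * beta)) as Sq; unfold Rsqr in Sq; lra).
      assert (T1 : c * (v1 * v1) <= c * (2 * ((v1 + beta) * (v1 + beta))) + c * (2 * (K2 * dot w w))).
      { rewrite <- Rmult_plus_distr_l. apply Rmult_le_compat_l; lra. }
      assert (T2 : c * (2 * ((v1 + beta) * (v1 + beta))) <= a * ((v1 + beta) * (v1 + beta))).
      { rewrite <- Rmult_assoc. apply Rmult_le_compat_r. pose proof (Rle_0_sqr (v1 + beta)) as Sq; unfold Rsqr in Sq; lra. lra. }
      assert (T3 : c * (2 * (K2 * dot w w)) + c * dot w w <= c' * dot w w).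
      { replace (c * (2 * (K2 * dot w w)) + c * dot w w) with ((c * (1 + 2 * K2)) * dot w w) by ring.
        apply Rmult_le_compat_r; auto. }
      lra.
Qed.

Lemma quad_lower n (H : Mat n) : exists C, 0 <= C /\ forall v, - C * dot v v <= quad H v.
Proof.
  set (F := vsum n (fun i => dot (H i) (H i))).
  assert (HF : 0 <= F) by (apply vsum_nonneg; intro; apply dot_nonneg).
  exists (sqrt F). split. apply sqrt_pos. intro v.
  assert (Hmv : dot (mv H v) (mv H v) <= F * dot v v).
  { unfold F. rewrite <- (Rmult_comm (dot v v)), <- vsum_scal.
    unfold dot at 1. apply vsum_le. intro i. unfold mv.
    pose proof (cauchy_schwarz_sq _ (H i) v). lra. }
  pose proof (cauchy_schwarz_sq _ v (mv H v)) as CS. fold (quad H v) in CS.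
  pose proof (dot_nonneg _ v) as Hd.
  assert (Q2 : quad H v * quad H v <= (sqrt F * dot v v) * (sqrt F * dot v v)).
  { replace ((sqrt F * dot v v) * (sqrt F * dot v v)) with ((sqrt F * sqrt F) * (dot v v * dot v v)) by ring.
    rewrite sqrt_sqrt by auto.
    apply Rle_trans with (dot v v * dot (mv H v) (mv H v)); auto.
    replace (F * (dot v v * dot v v)) with (dot v v * (F * dot v v)) by ring.
    apply Rmult_le_compat_l; auto. }
  assert (0 <= sqrt F * dot v v) by (apply Rmult_le_pos; auto; apply sqrt_pos).
  rewrite Ropp_mult_distr_l_reverse. nra.
Qed.

Lemma mv_madd n (A B : Mat n) v i : mv (madd A B) v i = mv A v i + mv B v i.
Proof. unfold mv. change (madd A B i) with (vadd (A i) (B i)). apply dot_add_l. Qed.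
Lemma mv_mscal n c (A : Mat n) v i : mv (mscal c A) v i = c * mv A v i.
Proof. unfold mv. change (mscal c A i) with (vscal c (A i)). apply dot_scal_l. Qed.

Lemma normalize n (v : Vec n) : 0 < dot v v ->
  dot (vscal (/ sqrt (dot v v)) v) (vscal (/ sqrt (dot v v)) v) = 1.
Proof. intros P. rewrite dot_scal_l, dot_scal_r.
  rewrite <- Rmult_assoc. rewrite <- Rinv_mult. rewrite sqrt_sqrt by lra. field. lra. Qed.

Lemma rayleigh n (H : Mat n) lmin : symmetric H -> is_lambda_min H lmin ->
  forall v, lmin * dot v v <= quad H v.
Proof.
  intros S [[v0 [Hnz Hev]] Hmin].
  set (E := fun r => exists u, dot u u = 1 /\ r = - quad H u).
  destruct (quad_lower n H) as [C [HC HCb]].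
  assert (Bd : bound E).
  { exists C. intros r [u [Hu ->]]. specialize (HCb u). rewrite Hu in HCb. lra. }
  pose proof (dot_self_pos _ v0 Hnz) as P0.
  assert (Ne : exists r, E r).
  { exists (- quad H (vscal (/ sqrt (dot v0 v0)) v0)), (vscal (/ sqrt (dot v0 v0)) v0). split. apply normalize; exact P0. reflexivity. }
  destruct (completeness E Bd Ne) as [m [Ub Lub]].
  set (mu := - m).
  assert (Hunit : forall u, dot u u = 1 -> mu <= quad H u).
  { intros u Hu. assert (- quad H u <= m) by (apply Ub; exists u; auto). unfold mu; lra. }
  assert (Hall : forall v, mu * dot v v <= quad H v).
  { intro v. destruct (dot_nonneg _ v) as [Pv|Zv].
    - pose proof (Hunit _ (normalize _ v Pv)) as Hu. rewrite quad_scal in Hu.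
      rewrite <- Rinv_mult, sqrt_sqrt in Hu by lra.
      apply Rmult_le_compat_r with (r := dot v v) in Hu; [|lra].
      replace (/ dot v v * quad H v * dot v v) with (quad H v) in Hu by (field; lra).
      lra.
    - assert (v = vzero).
      { apply functional_extensionality; intro i. apply (dot_self_zero _ v (eq_sym Zv)). }
      subst v. rewrite quad_zero0, dot_zero_r. lra. }
  set (A := madd H (mscal (- mu) Id)).
  assert (SA : symmetric A) by (apply sym_madd; auto; apply sym_mscal, sym_Id).
  assert (QA : forall v, quad A v = quad H v - mu * dot v v).
  { intro v. unfold A. rewrite quad_madd, quad_mscal, quad_Id. ring. }
  assert (PA : forall v, 0 <= quad A v) by (intro v; rewrite QA; specialize (Hall v); lra).
  assert (MA : forall v i, mv A v i = mv H v i - mu * v i).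
  { intros v i. unfold A. rewrite mv_madd, mv_mscal, mv_Id. ring. }
  assert (Ker : exists v, (forall i, mv A v i = 0) /\ exists i, v i <> 0).
  { apply NNPP. intro Nk.
    assert (K : forall v, (forall i, mv A v i = 0) -> forall i, v i = 0).
    { intros v Hv i. destruct (Req_dec (v i) 0) as [Z|Z]; auto. exfalso. apply Nk. exists v. split; eauto. }
    destruct (psd_coercive n A SA PA K) as [c [Hc Hcb]].
    assert (m <= m - c).
    { apply Lub. intros r [u [Hu ->]]. specialize (Hcb u). rewrite QA, Hu in Hcb. unfold mu in Hcb. lra. }
    lra. }
  destruct Ker as [v1 [Hk Hnz1]].
  assert (Eig : eigenvalue H mu).
  { exists v1. split; auto. intro i. specialize (Hk i). rewrite MA in Hk. lra. }
  specialize (Hmin mu Eig).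
  intro v. specialize (Hall v). pose proof (dot_nonneg _ v).
  assert (lmin * dot v v <= mu * dot v v) by (apply Rmult_le_compat_r; auto).
  lra.
Qed.

Theorem lemma4 (n : nat) (f : Vec n -> R) (gf : Vec n -> Vec n)
    (psi : Vec n -> ER) (L : R) (gamma : R) :
  assumption1 f gf psi L -> 0 < gamma <= 1 ->
  (* (i) *)
  (forall (x : Vec n) (H : Mat n) (sigma eta lmin : R) (d : Vec n),
     dom psi x -> symmetric H -> 0 < sigma ->
     strongly_convex sigma (Qfun gf psi x H) ->
     0 <= eta < 1 -> eta_inexact (Qfun gf psi x H) eta d ->
     is_lambda_min H lmin ->
     (1 - gamma) * ((1 - sqrt eta) / (1 + sqrt eta)) * sigma + lmin >= L ->
     suff_dec f gf psi gamma x H d) /\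
  (* (ii) *)
  (forall (beta eta m0 M0 : R) (x : nat -> Vec n) (H0 : nat -> Mat n)
          (J : nat -> nat) (d : nat -> nat -> Vec n),
     0 < beta < 1 -> 0 <= eta < 1 -> 0 < M0 -> m0 <= M0 ->
     (forall k, loewner_le (mscal m0 Id) (H0 k) /\ loewner_le (H0 k) (mscal M0 Id)) ->
     (* Variant 2 *)
     (alg2_run f gf psi gamma eta (fun H0k j => trialH2 H0k beta j) x H0 J d ->
        forall k s, is_spec_norm (trialH2 (H0 k) beta (J k)) s ->
          s <= Mtilde2 L beta gamma eta m0 M0) /\
     (* Variant 1 *)
     (0 < m0 -> (forall k, posdef (H0 k)) ->
      alg2_run f gf psi gamma eta (fun H0k j => trialH1 H0k beta j) x H0 J d ->
        forall k s, is_spec_norm (trialH1 (H0 k) beta (J k)) s ->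
          s <= Mtilde1 L beta gamma eta m0 M0)).

Proof.
  intros A1 Hg. pose proof A1 as [HL [G [Lip _]]]. split.
  - intros x H sigma eta lmin d Hdom S Hsig SC He Hin Hl HC.
    exact (core n f gf psi L gamma x H sigma eta lmin d G Lip Hg Hdom Hsig SC He Hin (rayleigh n H lmin S Hl) HC).
  - intros beta eta m0 M0 x H0 J d Hb He HM Hm Lw. split.
    + intros R k s. exact (variant2 n f gf psi L gamma beta eta m0 M0 x H0 J d A1 Hg Hb He HM Hm Lw R k s).
    + intros Hm0 _ R k s. exact (variant1 n f gf psi L gamma beta eta m0 M0 x H0 J d A1 Hg Hb He HM Hm Lw Hm0 R k s).
Qed.
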